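(* If $G\subset\mathrm{Diff}^1_+([0,1])$ is a group without hyperbolic fixed points, then its completion $I^\infty(G)$ is contained in $\mathrm{Diff}^1_+([0,1])$ and is without hyperbolic fixed points.
   Context: $G\subset \mathrm{Diff}^1_+([0,1])$ is without hyperbolic fixed points if $Dg(x)=1$ for every $g\in G$ and every $x\in\mathrm{Fix}(g)$ (such a group has no linked pairs of successive fixed points). A homeomorphism $h\in\mathrm{Homeo}_+([0,1])$ is induced by $g$ if $h(x)\in\{x,g(x)\}$ for every $x\in[0,1]$. For a group $G$, $I(G)$ is the group generated by all homeomorphisms induced by elements of $G$; $I^0(G)=G$, $I^{n+1}(G)=I(I^n(G))$, and the completion is $I^\infty(G)=\bigcup_n I^n(G)$. *)

(* Defs.v *)
From Stdlib Require Import Reals.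
Open Scope R_scope.

(* Elements of Homeo/Diff of [0,1] are represented by functions R -> R;
   only their values on [0,1] matter. *)
Definition I01 (x : R) : Prop := 0 <= x <= 1.

Definition deriv01 (f : R -> R) (x l : R) : Prop :=
  limit1_in (fun y => (f y - f x) / (y - x)) (fun y => I01 y /\ y <> x) l x.

Definition cont01 (f : R -> R) (x : R) : Prop :=
  limit1_in f I01 (f x) x.

Definition homeo01 (f : R -> R) : Prop :=
  (forall x, I01 x -> cont01 f x) /\
  (forall x y, I01 x -> I01 y -> x < y -> f x < f y) /\
  f 0 = 0 /\ f 1 = 1.

Definition C1_01 (f : R -> R) : Prop :=
  exists Df : R -> R,
    (forall x, I01 x -> deriv01 f x (Df x)) /\
    (forall x, I01 x -> cont01 Df x).

Definition inv01 (g f : R -> R) : Prop :=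
  forall x, I01 x -> g (f x) = x /\ f (g x) = x.

Definition diff1 (f : R -> R) : Prop :=
  homeo01 f /\ C1_01 f /\ exists g, inv01 g f /\ C1_01 g.

Definition is_group (G : (R -> R) -> Prop) : Prop :=
  G (fun x => x) /\
  (forall f g, G f -> G g -> G (fun x => f (g x))) /\
  (forall f, G f -> exists g, G g /\ inv01 g f).

Definition no_hyperbolic (G : (R -> R) -> Prop) : Prop :=
  forall g x, G g -> I01 x -> g x = x -> deriv01 g x 1.

Definition induced (h g : R -> R) : Prop :=
  homeo01 h /\ forall x, I01 x -> h x = x \/ h x = g x.

Inductive gen_group (S : (R -> R) -> Prop) : (R -> R) -> Prop :=
| gen_base : forall f, S f -> gen_group S f
| gen_id : gen_group S (fun x => x)
| gen_comp : forall f g, gen_group S f -> gen_group S g ->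
    gen_group S (fun x => f (g x))
| gen_inv : forall f g, gen_group S f -> inv01 g f -> gen_group S g.

Definition Iop (G : (R -> R) -> Prop) : (R -> R) -> Prop :=
  gen_group (fun h => exists g, G g /\ induced h g).

Fixpoint Iter (n : nat) (G : (R -> R) -> Prop) : (R -> R) -> Prop :=
  match n with
  | O => G
  | S n => Iop (Iter n G)
  end.

Definition Iinf (G : (R -> R) -> Prop) (f : R -> R) : Prop :=
  exists n, Iter n G f.

(* Main.v *)
Require Import Defs.
From Stdlib Require Import Reals Lra ClassicalEpsilon Ranalysis5.
Open Scope R_scope.

Lemma lim_iff f D l x0 : limit1_in f D l x0 <-> forall eps, eps > 0 -> exists alp, alp > 0 /\ forall x, D x -> Rabs (x - x0) < alp -> Rabs (f x - l) < eps.
Proof.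
  unfold limit1_in, limit_in; simpl; unfold Rdist; split; intros H eps He;
  destruct (H eps He) as [a [Ha H']]; exists a; split; auto; intros; try apply H'; tauto.
Qed.

Lemma lim_weak f D D' l x0 : (forall x, D' x -> D x) -> limit1_in f D l x0 -> limit1_in f D' l x0.
Proof.
  rewrite !lim_iff; intros HD H eps He; destruct (H eps He) as [a [Ha H']]; exists a; split; auto.
Qed.

Lemma lim_ext_loc f g D l x0 r : r > 0 -> (forall x, D x -> Rabs (x - x0) < r -> f x = g x) ->
  limit1_in f D l x0 -> limit1_in g D l x0.
Proof.
  rewrite !lim_iff; intros Hr HE H eps He; destruct (H eps He) as [a [Ha H']].
  exists (Rmin a r); split. apply Rmin_pos; lra.
  intros x Dx Hx. rewrite <- HE; auto. apply H'; auto.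
  apply Rlt_le_trans with (1 := Hx), Rmin_l.
  apply Rlt_le_trans with (1 := Hx), Rmin_r.
Qed.

Lemma lim_const D c x0 : limit1_in (fun _ => c) D c x0.
Proof. rewrite lim_iff; intros eps He; exists 1; split; [lra|]; intros; rewrite Rminus_diag, Rabs_R0; lra. Qed.

Lemma hom_le f x y : homeo01 f -> I01 x -> I01 y -> x <= y -> f x <= f y.
Proof. intros [_ [H _]] Ix Iy [Hl|He]. left; auto. subst; lra. Qed.

Lemma hom_I01 f x : homeo01 f -> I01 x -> I01 (f x).
Proof.
  intros Hf Ix. pose proof Hf as [_ [_ [H0 H1]]].
  assert (I0 : I01 0) by (unfold I01; lra). assert (I1 : I01 1) by (unfold I01; lra).
  split. rewrite <- H0; apply hom_le; auto; unfold I01 in *; lra.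
  rewrite <- H1; apply hom_le; auto; unfold I01 in *; lra.
Qed.

Lemma hom_inj f x y : homeo01 f -> I01 x -> I01 y -> f x = f y -> x = y.
Proof.
  intros [_ [H _]] Ix Iy E. destruct (Rtotal_order x y) as [L|[L|L]]; auto.
  specialize (H _ _ Ix Iy L); lra. specialize (H _ _ Iy Ix L); lra.
Qed.

Lemma adh01 x : I01 x -> adhDa (fun y => I01 y /\ y <> x) x.
Proof.
  unfold adhDa, I01, Rdist; intros Ix alp Ha.
  pose (m := Rmin alp (1/2)). assert (m > 0) by (apply Rmin_pos; lra).
  assert (m <= 1/2) by apply Rmin_r. assert (m <= alp) by apply Rmin_l.
  destruct (Rle_dec x (1/2)).
  - exists (x + m/2). repeat split; try lra. rewrite Rabs_right; lra.
  - exists (x - m/2). repeat split; try lra. rewrite Rabs_left; lra.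
Qed.

Lemma deriv_unique f x l1 l2 : I01 x -> deriv01 f x l1 -> deriv01 f x l2 -> l1 = l2.
Proof. intros Ix H1 H2. eapply single_limit; eauto. apply adh01; auto. Qed.

Lemma deriv_cont f x l : I01 x -> deriv01 f x l -> cont01 f x.
Proof.
  unfold deriv01, cont01. rewrite !lim_iff. intros Ix H eps He.
  destruct (H 1 ltac:(lra)) as [a [Ha H']].
  pose proof (Rabs_pos l).
  exists (Rmin a (eps / (Rabs l + 1))). split.
  apply Rmin_pos; auto. apply Rdiv_lt_0_compat; lra.
  intros y Iy Hy. destruct (Req_dec y x) as [->|Nyx].
  rewrite Rminus_diag, Rabs_R0; lra.
  assert (Hq := H' y (conj Iy Nyx) (Rlt_le_trans _ _ _ Hy (Rmin_l _ _))).
  assert (Hy2 := Rlt_le_trans _ _ _ Hy (Rmin_r _ _)).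
  replace (f y - f x) with ((f y - f x) / (y - x) * (y - x)) by (field; lra).
  rewrite Rabs_mult.
  assert (Rabs ((f y - f x) / (y - x)) <= Rabs l + 1).
  { pose proof (Rabs_triang_inv ((f y - f x) / (y - x)) l). lra. }
  apply Rle_lt_trans with ((Rabs l + 1) * Rabs (y - x)).
  apply Rmult_le_compat_r; auto. apply Rabs_pos.
  apply Rlt_le_trans with ((Rabs l + 1) * (eps / (Rabs l + 1))).
  apply Rmult_lt_compat_l; lra. right; field; lra.
Qed.
Lemma cont_comp f g x : (forall y, I01 y -> I01 (g y)) -> I01 x -> cont01 g x -> cont01 f (g x) ->
  cont01 (fun y => f (g y)) x.
Proof.
  unfold cont01; intros Hg Ix Cg Cf.
  eapply lim_weak; [| apply (limit_comp g f I01 I01 (g x) (f (g x)) x Cg Cf)].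
  intros y Iy; split; auto.
Qed.

Lemma deriv_id x : deriv01 (fun y => y) x 1.
Proof.
  unfold deriv01; rewrite lim_iff; intros eps He; exists 1; split; [lra|].
  intros y [_ N] _. replace ((y - x) / (y - x) - 1) with 0 by (field; lra). rewrite Rabs_R0; lra.
Qed.

Lemma deriv_ext f g x l : (forall y, I01 y -> f y = g y) -> I01 x -> deriv01 f x l -> deriv01 g x l.
Proof.
  unfold deriv01; intros E Ix H. apply (lim_ext_loc (fun y => (f y - f x) / (y - x)) _ _ _ _ 1); [lra| |exact H].
  intros y [Iy _] _. rewrite !E; auto.
Qed.

Lemma cont_ext f g x : (forall y, I01 y -> f y = g y) -> I01 x -> cont01 f x -> cont01 g x.
Proof.
  unfold cont01; intros E Ix H. rewrite <- E; auto. apply (lim_ext_loc f _ _ _ _ 1); [lra| |exact H].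
  intros y Iy _. rewrite !E; auto.
Qed.

Lemma C1_ext f g : (forall y, I01 y -> f y = g y) -> C1_01 f -> C1_01 g.
Proof. intros E [D [H1 H2]]; exists D; split; auto. intros; eapply deriv_ext; eauto. Qed.

Lemma chain f g x a b : homeo01 g -> I01 x -> deriv01 g x b -> deriv01 f (g x) a ->
  deriv01 (fun y => f (g y)) x (a * b).
Proof.
  intros Hg Ix Dg Df. unfold deriv01 in *.
  assert (Cg : cont01 g x) by (eapply deriv_cont; eauto).
  assert (Cg' : limit1_in g (fun y => I01 y /\ y <> x) (g x) x).
  { eapply lim_weak; [|exact Cg]. intros y [H _]; exact H. }
  pose proof (limit_comp _ _ _ _ _ _ _ Cg' Df) as Hc.
  assert (Hc' : limit1_in (fun y => (f (g y) - f (g x)) / (g y - g x)) (fun y => I01 y /\ y <> x) a x).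
  { eapply lim_weak; [|exact Hc]. intros y [Iy N]. split; split; auto.
    apply hom_I01; auto. intro E; apply N; eapply hom_inj; eauto. }
  pose proof (limit_mul _ _ _ _ _ _ Hc' Dg) as Hm.
  apply (lim_ext_loc (fun y => (f (g y) - f (g x)) / (g y - g x) * ((g y - g x) / (y - x))) _ _ _ _ 1); [lra| |exact Hm].
  intros y [Iy N] _. assert (g y <> g x) by (intro E; apply N; eapply hom_inj; eauto).
  field; split; lra.
Qed.

Lemma cont_mul f g x : cont01 f x -> cont01 g x -> cont01 (fun y => f y * g y) x.
Proof. unfold cont01; intros; apply limit_mul; auto. Qed.

Lemma cont_inv f x : cont01 f x -> f x <> 0 -> cont01 (fun y => / f y) x.
Proof. unfold cont01; intros; apply limit_inv; auto. Qed.
Definition clamp (t : R) : R := Rmax 0 (Rmin 1 t).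

Lemma clamp_I01 t : I01 (clamp t).
Proof. unfold clamp, I01, Rmax, Rmin; repeat destruct Rle_dec; lra. Qed.

Lemma clamp_id t : I01 t -> clamp t = t.
Proof. unfold clamp, I01, Rmax, Rmin; intros; repeat destruct Rle_dec; lra. Qed.

Lemma clamp_lip s t : Rabs (clamp s - clamp t) <= Rabs (s - t).
Proof.
  unfold clamp, Rmax, Rmin; repeat destruct Rle_dec;
  unfold Rabs; repeat destruct Rcase_abs; lra.
Qed.

Lemma surj f y : homeo01 f -> I01 y -> exists x, I01 x /\ f x = y.
Proof.
  intros Hf Iy. pose proof Hf as [Cf [_ [H0 H1]]].
  destruct (Req_dec y 0) as [->|N0]. exists 0; split; auto; unfold I01; lra.
  destruct (Req_dec y 1) as [->|N1]. exists 1; split; auto; unfold I01; lra.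
  pose (F := fun t => f (clamp t) - y).
  assert (CF : forall a, continuity_pt F a).
  { intro a. unfold continuity_pt, continue_in, D_x, no_cond. rewrite lim_iff.
    intros eps He. destruct (proj1 (lim_iff _ _ _ _) (Cf _ (clamp_I01 a)) eps He) as [al [Ha Hal]].
    exists al; split; auto. intros t _ Ht. unfold F.
    replace (f (clamp t) - y - (f (clamp a) - y)) with (f (clamp t) - f (clamp a)) by ring.
    apply Hal. apply clamp_I01. eapply Rle_lt_trans; [apply clamp_lip| exact Ht]. }
  destruct (IVT_interv F 0 1 (fun a _ => CF a)) as [z [Hz Fz]]; try lra.
  - unfold F; rewrite clamp_id, H0; unfold I01 in *; lra.
  - unfold F; rewrite clamp_id, H1; unfold I01 in *; lra.
  - exists z; split; [exact Hz|]. unfold F in Fz; rewrite clamp_id in Fz; auto; lra.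
Qed.

Lemma inv_I01 f k y : homeo01 f -> inv01 k f -> I01 y -> I01 (k y).
Proof.
  intros Hf Hk Iy. destruct (surj f y Hf Iy) as [x [Ix <-]]. rewrite (proj1 (Hk x Ix)); auto.
Qed.

Lemma inv_cont f k y0 : homeo01 f -> inv01 k f -> I01 y0 -> cont01 k y0.
Proof.
  intros Hf Hk Iy0. unfold cont01; rewrite lim_iff; intros eps He.
  pose proof Hf as [_ [Mf _]].
  set (x0 := k y0). assert (Ix0 : I01 x0) by (apply (inv_I01 f); auto).
  assert (Fx0 : f x0 = y0) by (apply Hk; auto).
  set (a := Rmax 0 (x0 - eps/2)). set (b := Rmin 1 (x0 + eps/2)).
  assert (Ia : I01 a) by (unfold a, I01, Rmax in *; destruct Rle_dec; lra).
  assert (Ib : I01 b) by (unfold b, I01, Rmin in *; destruct Rle_dec; lra).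
  assert (Ha : x0 - eps/2 <= a) by apply Rmax_r.
  assert (Hb : b <= x0 + eps/2) by apply Rmin_r.
  assert (Ha' : a <= x0) by (unfold a, Rmax, I01 in *; destruct Rle_dec; lra).
  assert (Hb' : x0 <= b) by (unfold b, Rmin, I01 in *; destruct Rle_dec; lra).
  set (d1 := if Rlt_dec a x0 then y0 - f a else 1).
  set (d2 := if Rlt_dec x0 b then f b - y0 else 1).
  assert (D1 : d1 > 0).
  { unfold d1; destruct (Rlt_dec a x0). specialize (Mf _ _ Ia Ix0 r); lra. lra. }
  assert (D2 : d2 > 0).
  { unfold d2; destruct (Rlt_dec x0 b). specialize (Mf _ _ Ix0 Ib r); lra. lra. }
  exists (Rmin d1 d2); split. apply Rmin_pos; auto.
  intros y Iy Hy. pose proof (Rmin_l d1 d2). pose proof (Rmin_r d1 d2).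
  apply Rabs_def2 in Hy. destruct Hy as [Hy1 Hy2].
  set (x := k y). assert (Ix : I01 x) by (apply (inv_I01 f); auto).
  assert (Fx : f x = y) by (apply Hk; auto). fold x0.
  assert (x <= b).
  { destruct (Rle_dec x b) as [|L]; auto. exfalso. apply Rnot_le_lt in L.
    assert (x0 < b) by (unfold b, Rmin, I01 in *; destruct Rle_dec; lra).
    specialize (Mf _ _ Ib Ix L). unfold d2 in *; destruct (Rlt_dec x0 b); lra. }
  assert (a <= x).
  { destruct (Rle_dec a x) as [|L]; auto. exfalso. apply Rnot_le_lt in L.
    assert (a < x0) by (unfold a, Rmax, I01 in *; destruct Rle_dec; lra).
    specialize (Mf _ _ Ix Ia L). unfold d1 in *; destruct (Rlt_dec a x0); lra. }
  apply Rabs_def1; lra.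
Qed.

Lemma inv_homeo f k : homeo01 f -> inv01 k f -> homeo01 k.
Proof.
  intros Hf Hk. pose proof Hf as [_ [Mf [H0 H1]]].
  assert (I0 : I01 0) by (unfold I01; lra). assert (I1 : I01 1) by (unfold I01; lra).
  split; [|split; [|split]].
  - intros; eapply inv_cont; eauto.
  - intros y1 y2 I1' I2' L. destruct (Rlt_dec (k y1) (k y2)) as [|N]; auto. exfalso.
    apply Rnot_lt_le in N. pose proof (hom_le f _ _ Hf (inv_I01 f k y2 Hf Hk I2') (inv_I01 f k y1 Hf Hk I1') N).
    rewrite (proj2 (Hk _ I1')), (proj2 (Hk _ I2')) in H. lra.
  - rewrite <- H0 at 1. apply Hk; auto.
  - rewrite <- H1 at 1. apply Hk; auto.
Qed.

Lemma inv_deriv f k y0 l : homeo01 f -> inv01 k f -> I01 y0 -> deriv01 f (k y0) l -> l <> 0 ->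
  deriv01 k y0 (/ l).
Proof.
  intros Hf Hk Iy0 Df Nl. unfold deriv01 in *.
  assert (Ck : limit1_in k (fun y => I01 y /\ y <> y0) (k y0) y0).
  { eapply lim_weak; [|apply (inv_cont f); eauto]. intros y [H _]; exact H. }
  pose proof (limit_comp _ _ _ _ _ _ _ Ck Df) as Hc.
  assert (Hc' : limit1_in (fun y => (f (k y) - f (k y0)) / (k y - k y0)) (fun y => I01 y /\ y <> y0) l y0).
  { eapply lim_weak; [|exact Hc]. intros y [Iy N]. split; split; auto.
    apply (inv_I01 f); auto. intro E. apply N. rewrite <- (proj2 (Hk _ Iy)), <- (proj2 (Hk _ Iy0)), E; auto. }
  pose proof (limit_inv _ _ _ _ Hc' Nl) as Hi.
  apply (lim_ext_loc (fun y => / ((f (k y) - f (k y0)) / (k y - k y0))) _ _ _ _ 1); [lra| |exact Hi].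
  intros y [Iy N] _.
  assert (k y <> k y0) by (intro E; apply N; rewrite <- (proj2 (Hk _ Iy)), <- (proj2 (Hk _ Iy0)), E; auto).
  rewrite (proj2 (Hk _ Iy)), (proj2 (Hk _ Iy0)). field; split; lra.
Qed.
Lemma I0' : I01 0. Proof. unfold I01; lra. Qed.
Lemma I1' : I01 1. Proof. unfold I01; lra. Qed.

Lemma homeo_id : homeo01 (fun x => x).
Proof.
  split; [|split; [|split]]; auto. intros x _. unfold cont01. apply lim_x.
Qed.

Lemma C1_id : C1_01 (fun x => x).
Proof. exists (fun _ => 1); split; intros; [apply deriv_id| apply lim_const]. Qed.

Lemma diff1_id : diff1 (fun x => x).
Proof. split; [apply homeo_id| split; [apply C1_id|]]. exists (fun x => x); split; [|apply C1_id]. intros x _; auto. Qed.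

Lemma homeo_comp f g : homeo01 f -> homeo01 g -> homeo01 (fun x => f (g x)).
Proof.
  intros Hf Hg. pose proof Hf as [Cf [Mf [F0 F1]]]. pose proof Hg as [Cg [Mg [G0 G1]]].
  split; [|split; [|split]].
  - intros x Ix. apply cont_comp; auto. intros; apply hom_I01; auto. apply Cf, hom_I01; auto.
  - intros x y Ix Iy L. apply Mf; try apply hom_I01; auto.
  - rewrite G0; auto.
  - rewrite G1; auto.
Qed.

Lemma C1_comp f g : C1_01 f -> C1_01 g -> homeo01 g -> C1_01 (fun x => f (g x)).
Proof.
  intros [Df [Hf1 Hf2]] [Dg [Hg1 Hg2]] Hg.
  exists (fun x => Df (g x) * Dg x); split; intros x Ix.
  - apply chain; auto. apply Hf1, hom_I01; auto.
  - apply cont_mul; auto. apply cont_comp; auto. intros; apply hom_I01; auto.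
    eapply deriv_cont; eauto. apply Hf2, hom_I01; auto.
Qed.

Lemma diff1_comp f g : diff1 f -> diff1 g -> diff1 (fun x => f (g x)).
Proof.
  intros [Hf [Cf [f' [If' Cf']]]] [Hg [Cg [g' [Ig' Cg']]]].
  split; [apply homeo_comp; auto| split; [apply C1_comp; auto|]].
  exists (fun x => g' (f' x)); split.
  - intros x Ix. split.
    + rewrite (proj1 (If' _ (hom_I01 g x Hg Ix))). apply Ig'; auto.
    + rewrite (proj2 (Ig' _ (inv_I01 f f' x Hf If' Ix))). apply If'; auto.
  - apply C1_comp; auto. apply (inv_homeo f); auto.
Qed.

Lemma diff1_inv f k : diff1 f -> inv01 k f -> diff1 k.
Proof.
  intros [Hf [Cf [f' [If' Cf']]]] Hk.
  split; [eapply inv_homeo; eauto| split].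
  - apply (C1_ext f'); auto. intros y Iy. destruct (surj f y Hf Iy) as [x [Ix <-]].
    rewrite (proj1 (If' x Ix)), (proj1 (Hk x Ix)); auto.
  - exists f; split; auto. intros x Ix; split; apply Hk; auto.
Qed.

Lemma diff1_deriv_nz f x l : diff1 f -> I01 x -> deriv01 f x l -> l <> 0.
Proof.
  intros [Hf [Cf [f' [If' [Df' [Hd _]]]]]] Ix Dl.
  assert (Ifx := hom_I01 f x Hf Ix).
  pose proof (chain f' f x _ _ Hf Ix Dl (Hd _ Ifx)) as Hc.
  assert (E : Df' (f x) * l = 1).
  { eapply deriv_unique; [exact Ix| |apply deriv_id]. eapply deriv_ext; [|exact Ix|exact Hc].
    intros; apply If'; auto. }
  intro; subst; lra.
Qed.

Lemma IFT f Df : homeo01 f -> (forall x, I01 x -> deriv01 f x (Df x)) -> (forall x, I01 x -> cont01 Df x) ->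
  (forall x, I01 x -> Df x <> 0) -> exists k, inv01 k f /\ C1_01 k.
Proof.
  intros Hf Hd Hc Hnz.
  assert (Ex : forall y, exists x, I01 y -> I01 x /\ f x = y).
  { intro y. destruct (classic (I01 y)) as [Iy|Ny].
    - destruct (surj f y Hf Iy) as [x Hx]; exists x; auto.
    - exists 0; intro; contradiction. }
  pose (k := fun y => proj1_sig (constructive_indefinite_description _ (Ex y))).
  assert (Hk : forall y, I01 y -> I01 (k y) /\ f (k y) = y).
  { intros y Iy. unfold k. destruct constructive_indefinite_description as [x Hx]; simpl; auto. }
  assert (Ik : inv01 k f).
  { intros x Ix. split; [|apply Hk; auto].
    destruct (Hk (f x) (hom_I01 f x Hf Ix)) as [I1 E]. eapply hom_inj; eauto. }
  exists k; split; auto.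
  exists (fun y => / Df (k y)); split; intros y Iy.
  - apply (inv_deriv f); auto. apply Hd, (inv_I01 f); auto. apply Hnz, (inv_I01 f); auto.
  - apply cont_inv; [|apply Hnz, (inv_I01 f); auto]. apply cont_comp; auto.
    intros; apply (inv_I01 f); auto. apply (inv_cont f); auto. apply Hc, (inv_I01 f); auto.
Qed.
Definition Dh (h Dg : R -> R) (x : R) : R := if Req_EM_T (h x) x then 1 else Dg x.

Section Induced.
Variables (g Dg h : R -> R).
Hypothesis Hg : homeo01 g.
Hypothesis HDg : forall x, I01 x -> deriv01 g x (Dg x).
Hypothesis HCg : forall x, I01 x -> cont01 Dg x.
Hypothesis Hfix : forall x, I01 x -> g x = x -> Dg x = 1.
Hypothesis Hh : homeo01 h.
Hypothesis Hind : forall x, I01 x -> h x = x \/ h x = g x.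

Lemma loc x : I01 x -> g x <> x -> exists r, r > 0 /\ forall y, I01 y -> Rabs (y - x) < r ->
  (h x = x -> h y = y) /\ (h x <> x -> h y = g y /\ g y <> y).
Proof.
  intros Ix N. set (d := Rabs (g x - x)).
  assert (Hd : d > 0) by (apply Rabs_pos_lt; lra).
  destruct (proj1 (lim_iff _ _ _ _) (proj1 Hh x Ix) (d/3) ltac:(lra)) as [r1 [R1 H1]].
  destruct (proj1 (lim_iff _ _ _ _) (proj1 Hg x Ix) (d/3) ltac:(lra)) as [r2 [R2 H2]].
  exists (Rmin (Rmin r1 r2) (d/3)). split. repeat apply Rmin_pos; lra.
  intros y Iy Hy.
  pose proof (Rmin_l (Rmin r1 r2) (d/3)). pose proof (Rmin_r (Rmin r1 r2) (d/3)).
  pose proof (Rmin_l r1 r2). pose proof (Rmin_r r1 r2).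
  specialize (H1 y Iy ltac:(lra)). specialize (H2 y Iy ltac:(lra)).
  apply Rabs_def2 in H1, H2, Hy.
  unfold d in *. destruct (Rcase_abs (g x - x)) as [Lt|Ge];
    [rewrite Rabs_left in *; auto | rewrite Rabs_right in *; auto];
  (split; intro Hx; [|destruct (Hind x Ix) as [E|E]; [contradiction|]]);
  destruct (Hind y Iy) as [E'|E']; rewrite ?Hx, ?E, ?E' in *; try split; try lra.
Qed.
Lemma Dh_cases y : (h y = y /\ Dh h Dg y = 1) \/ (h y <> y /\ Dh h Dg y = Dg y).
Proof. unfold Dh; destruct Req_EM_T; auto. Qed.

Lemma induced_deriv x : I01 x -> deriv01 h x (Dh h Dg x).
Proof.
  intros Ix. unfold deriv01.
  destruct (Req_dec (g x) x) as [Fx|Nx].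
  - assert (Hx : h x = x) by (destruct (Hind x Ix); congruence).
    assert (E : Dh h Dg x = 1) by (unfold Dh; destruct Req_EM_T; tauto).
    rewrite E. pose proof (HDg x Ix) as D. unfold deriv01 in D. rewrite Hfix in D; auto.
    rewrite lim_iff in *. intros eps He. destruct (D eps He) as [a [Ha Ha']]. exists a; split; auto.
    intros y [Iy Ny] Hy. rewrite Hx. destruct (Hind y Iy) as [E'|E'].
    + rewrite E'. replace ((y - x) / (y - x) - 1) with 0 by (field; lra). rewrite Rabs_R0; lra.
    + rewrite E'. replace (g y - x) with (g y - g x) by (rewrite Fx; ring). apply Ha'; auto.
  - destruct (loc x Ix Nx) as [r [Hr L]].
    destruct (Req_dec (h x) x) as [Hx|Hx].
    + assert (E : Dh h Dg x = 1) by (unfold Dh; destruct Req_EM_T; tauto). rewrite E.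
      apply (lim_ext_loc (fun _ => 1) _ _ _ _ r); auto; [|apply lim_const].
      intros y [Iy Ny] Hy. rewrite (proj1 (L y Iy Hy) Hx), Hx. field; lra.
    + assert (E : Dh h Dg x = Dg x) by (unfold Dh; destruct Req_EM_T; tauto). rewrite E.
      apply (lim_ext_loc (fun y => (g y - g x) / (y - x)) _ _ _ _ r); auto; [|apply HDg; auto].
      intros y [Iy Ny] Hy. rewrite (proj1 (proj2 (L y Iy Hy) Hx)).
      destruct (Hind x Ix); [contradiction|]. congruence.
Qed.

Lemma induced_cont x : I01 x -> cont01 (Dh h Dg) x.
Proof.
  intros Ix. unfold cont01.
  destruct (Req_dec (g x) x) as [Fx|Nx].
  - assert (Hx : h x = x) by (destruct (Hind x Ix); congruence).
    assert (E : Dh h Dg x = 1) by (unfold Dh; destruct Req_EM_T; tauto).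
    rewrite E. pose proof (HCg x Ix) as D. unfold cont01 in D. rewrite Hfix in D; auto.
    rewrite lim_iff in *. intros eps He. destruct (D eps He) as [a [Ha Ha']]. exists a; split; auto.
    intros y Iy Hy. destruct (Dh_cases y) as [[_ ->]|[_ ->]]; auto.
    rewrite Rminus_diag, Rabs_R0; lra.
  - destruct (loc x Ix Nx) as [r [Hr L]].
    destruct (Req_dec (h x) x) as [Hx|Hx].
    + assert (E : Dh h Dg x = 1) by (unfold Dh; destruct Req_EM_T; tauto). rewrite E.
      apply (lim_ext_loc (fun _ => 1) _ _ _ _ r); auto; [|apply lim_const].
      intros y Iy Hy. unfold Dh. destruct Req_EM_T; auto.
      exfalso; apply n, (proj1 (L y Iy Hy) Hx).
    + assert (E : Dh h Dg x = Dg x) by (unfold Dh; destruct Req_EM_T; tauto). rewrite E.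
      apply (lim_ext_loc Dg _ _ _ _ r); auto; [|apply HCg; auto].
      intros y Iy Hy. destruct (proj2 (L y Iy Hy) Hx) as [E1 E2].
      unfold Dh. destruct Req_EM_T; auto. congruence.
Qed.

End Induced.
Section Main.
Variable G : (R -> R) -> Prop.
Hypothesis HG : is_group G.
Hypothesis HdG : forall g, G g -> diff1 g.
Hypothesis HnG : no_hyperbolic G.

Definition J (f : R -> R) : Prop := diff1 f /\ forall x, I01 x -> exists g, G g /\ g x = f x /\
  exists l, deriv01 f x l /\ deriv01 g x l.

Lemma diff1_deriv f x : diff1 f -> I01 x -> exists l, deriv01 f x l.
Proof. intros [_ [[D [H _]] _]] Ix. exists (D x); auto. Qed.

Lemma J_G f : G f -> J f.
Proof.
  intros Gf. split; auto. intros x Ix. exists f; split; auto; split; auto.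
  destruct (diff1_deriv f x (HdG f Gf) Ix) as [l Hl]; exists l; auto.
Qed.

Lemma J_nohyp f x : J f -> I01 x -> f x = x -> deriv01 f x 1.
Proof.
  intros [_ Hf] Ix Fx. destruct (Hf x Ix) as [g [Gg [E [l [D1 D2]]]]].
  assert (l = 1) by (eapply deriv_unique; eauto; apply HnG; auto; congruence).
  subst; auto.
Qed.

Lemma J_id : J (fun x => x).
Proof. apply J_G, HG. Qed.

Lemma J_comp f g : J f -> J g -> J (fun x => f (g x)).
Proof.
  intros [Df Hf] [Dg Hg]. split; [apply diff1_comp; auto|]. intros x Ix.
  destruct (Hg x Ix) as [g0 [Gg0 [E0 [l2 [D2 D2']]]]].
  assert (Igx := hom_I01 g x (proj1 Dg) Ix).
  destruct (Hf (g x) Igx) as [f0 [Gf0 [E1 [l1 [D1 D1']]]]].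
  exists (fun y => f0 (g0 y)). split; [apply HG; auto|]. split; [simpl; congruence|].
  exists (l1 * l2); split.
  - apply chain; auto. apply Dg.
  - apply chain; auto. apply (HdG g0 Gg0). rewrite E0; auto.
Qed.

Lemma J_inv f k : J f -> inv01 k f -> J k.
Proof.
  intros [Df Hf] Hk. assert (Dk : diff1 k) by (eapply diff1_inv; eauto).
  split; auto. intros y Iy.
  set (x := k y). assert (Ix : I01 x) by (apply (inv_I01 f); auto; apply Df).
  assert (Fx : f x = y) by (apply Hk; auto).
  destruct (Hf x Ix) as [g0 [Gg0 [E0 [l [D1 D1']]]]].
  destruct (proj2 (proj2 HG) g0 Gg0) as [g0' [Gg0' Ig0']].
  exists g0'; split; auto.
  assert (Eg : g0' y = x) by (rewrite <- Fx, <- E0; apply Ig0'; auto).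
  split; [auto|].
  destruct (diff1_deriv k y Dk Iy) as [m Hm].
  destruct (diff1_deriv g0' y (HdG _ Gg0') Iy) as [m' Hm'].
  assert (E1 : l * m = 1).
  { eapply deriv_unique; [exact Iy| |apply deriv_id]. eapply deriv_ext; [|exact Iy|].
    2: { apply (chain f k y l m); auto. apply Dk. } intros; apply Hk; auto. }
  assert (E2 : l * m' = 1).
  { eapply deriv_unique; [exact Iy| |apply deriv_id]. eapply deriv_ext; [|exact Iy|].
    2: { apply (chain g0 g0' y l m'); auto. apply (HdG _ Gg0'). rewrite Eg; exact D1'. } intros; apply Ig0'; auto. }
  assert (Em : m = m') by (apply Rmult_eq_reg_l with l; [lra|]; intro Hl; rewrite Hl in E1; lra).
  rewrite <- Em in Hm'. exists m; auto.
Qed.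

Lemma J_induced h g : J g -> induced h g -> J h.
Proof.
  intros [Dg Hg] [Hh Hind].
  pose proof Dg as [Hgh [[Dgf [HD HC]] _]].
  assert (Hfix : forall x, I01 x -> g x = x -> Dgf x = 1).
  { intros x Ix E. eapply deriv_unique; eauto. apply J_nohyp; auto. split; auto. }
  assert (Dd : forall x, I01 x -> deriv01 h x (Dh h Dgf x)) by (intros; eapply induced_deriv; eauto).
  assert (Dc : forall x, I01 x -> cont01 (Dh h Dgf) x) by (intros; eapply induced_cont; eauto).
  assert (Nz : forall x, I01 x -> Dh h Dgf x <> 0).
  { intros x Ix. destruct (Dh_cases Dgf h x) as [[_ ->]|[_ ->]]. lra.
    eapply diff1_deriv_nz; eauto. }
  destruct (IFT h (Dh h Dgf) Hh Dd Dc Nz) as [k [Ik Ck]].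
  split.
  - split; auto. split; [exists (Dh h Dgf); auto| exists k; auto].
  - intros x Ix. destruct (Dh_cases Dgf h x) as [[Hx E]|[Hx E]].
    + exists (fun y => y). split; [apply HG|]. split; [auto|]. exists 1; split; [|apply deriv_id].
      rewrite <- E; auto.
    + destruct (Hind x Ix) as [|Hx']; [contradiction|].
      destruct (Hg x Ix) as [g0 [Gg0 [E0 [l [D1 D1']]]]].
      exists g0; split; auto; split; [congruence|]. exists l; split; auto.
      rewrite <- (deriv_unique g x _ _ Ix (HD x Ix) D1), <- E; auto.
Qed.

Lemma J_iter n f : Iter n G f -> J f.
Proof.
  revert f; induction n as [|n IH]; simpl; intros f Hf.
  - apply J_G; auto.
  - unfold Iop in Hf. induction Hf as [f [g [Gg Ig]]| |f g _ IHf _ IHg|f g _ IHf Ig].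
    + eapply J_induced; eauto.
    + apply J_id.
    + apply J_comp; auto.
    + eapply J_inv; eauto.
Qed.

End Main.

Theorem lemmal (G : (R -> R) -> Prop) :
  is_group G ->
  (forall g, G g -> diff1 g) ->
  no_hyperbolic G ->
  (forall f, Iinf G f -> diff1 f) /\ no_hyperbolic (Iinf G).
Proof.
  intros HG HdG HnG. split.
  - intros f [n Hf]. apply (J_iter G HG HdG HnG n f Hf).
  - intros f x [n Hf] Ix Fx. eapply J_nohyp; eauto. apply (J_iter G HG HdG HnG n f Hf).
Qed.
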